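(* (1) Let $n\in\mathbb N$ and let $T:\mathbb R_{n+1}[z]\to\mathbb R[z]$ be linear and preserve hyperbolicity. If $f\in\mathbb R[z]$ is strictly hyperbolic of degree $n$ or $n+1$ with $T(f)=0$, then $T(g)$ is hyperbolic or zero for every $g\in\mathbb R[z]$ with $\deg g\le n+1$. (2) Let $T:\mathbb C_n[z]\to\mathbb C[z]$ be a linear stability preserver. If $f\in\mathbb C[z]$ is strictly stable of degree $n$ with $T(f)=0$, then $T(g)$ is stable or zero for every $g\in\mathbb C[z]$ with $\deg g\le n$.
   Context: A real univariate polynomial is hyperbolic if it is non-zero with only real zeros; strictly hyperbolic if moreover its zeros are simple. A univariate complex polynomial $f$ is stable if $f\neq0$ and $f(z)\neq0$ whenever $\Im z>0$; strictly stable if $f(z)\neq0$ whenever $\Im z\ge0$. $T$ preserves hyperbolicity (resp. stability) if it maps hyperbolic (resp. stable) polynomials in its domain to hyperbolic (resp. stable) polynomials or $0$. *)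

(* Defs.v *)
From HB Require Import structures.
From mathcomp Require Import all_boot all_order all_algebra.
From mathcomp Require Import reals.
From mathcomp Require Import complex.
Set Implicit Arguments. Unset Strict Implicit. Unset Printing Implicit Defensive.
Import Order.TTheory GRing.Theory Num.Theory.
Local Open Scope ring_scope.

Definition cpoly (R : realType) (p : {poly R}) : {poly R[i]} :=
  map_poly (real_complex R) p.

Definition hyperbolic (R : realType) (p : {poly R}) : Prop :=
  p != 0 /\ forall z : R[i], root (cpoly p) z -> Im z = 0.

Definition strictly_hyperbolic (R : realType) (p : {poly R}) : Prop :=
  hyperbolic p /\
  forall z : R[i], ~~ ((('X - z%:P) ^+ 2) %| cpoly p).

Definition stable (R : realType) (f : {poly R[i]}) : Prop :=
  f != 0 /\ forall z : R[i], 0 < Im z -> f.[z] != 0.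

Definition strictly_stable (R : realType) (f : {poly R[i]}) : Prop :=
  forall z : R[i], 0 <= Im z -> f.[z] != 0.

(* K_m[z] = polynomials of degree <= m, i.e. size <= m+1.
   T is linear on K_m[z] (values outside are irrelevant). *)
Definition linear_on (K : nzRingType) (m : nat) (T : {poly K} -> {poly K}) : Prop :=
  forall (a : K) (p q : {poly K}), (size p <= m.+1)%N -> (size q <= m.+1)%N ->
    T (a *: p + q) = a *: T p + T q.

Definition preserves (K : nzRingType) (m : nat) (P : {poly K} -> Prop)
  (T : {poly K} -> {poly K}) : Prop :=
  forall p : {poly K}, (size p <= m.+1)%N -> P p -> P (T p) \/ T p = 0.

(* Main.v *)
Require Import Defs.
From HB Require Import structures.
From mathcomp Require Import all_boot all_order all_algebra.
From mathcomp Require Import reals.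
From mathcomp Require Import complex polyrcf.
From mathcomp Require Import ring lra zify.
Import Order.TTheory GRing.Theory Num.Theory.
Local Open Scope ring_scope.
Local Open Scope complex_scope.

Section P1.
Variable R : realType.
Local Notation Rc := (@complex.Re R).
Local Notation Ic := (@complex.Im R).

Lemma ImE' (z : R[i]) : 'Im z = (Ic z)%:C.
Proof. by rewrite complexIm. Qed.

Lemma ImC (a : R) (z : R[i]) : Ic (a%:C * z) = a * Ic z.
Proof. case: z => x y /=. ring. Qed.

Lemma cpolyM (p q : {poly R}) : cpoly (p * q) = cpoly p * cpoly q.
Proof. by rewrite /cpoly rmorphM. Qed.

Lemma cpoly_root (p : {poly R}) (x : R) : root (cpoly p) x%:C = root p x.
Proof. by rewrite /root /cpoly horner_map fmorph_eq0. Qed.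

Lemma size_cpoly (p : {poly R}) : size (cpoly p) = size p.
Proof. by rewrite /cpoly size_map_inj_poly //; apply: complexI. Qed.

Lemma hyp_mul (p q : {poly R}) : hyperbolic p -> hyperbolic q -> hyperbolic (p * q).
Proof.
move=> [p0 hp] [q0 hq]; split; first by rewrite mulf_neq0.
by move=> z; rewrite cpolyM rootM => /orP [/hp|/hq].
Qed.

Lemma hyp_size2 (q : {poly R}) : q != 0 -> (size q <= 2)%N -> hyperbolic q.
Proof.
move=> q0 sq; split => // z rz.
have cq0 : cpoly q != 0 by rewrite -size_poly_eq0 size_cpoly size_poly_eq0.
have := root_size_gt1 cq0 rz; rewrite size_cpoly => s1.
have s2 : size q = 2 by apply/eqP; rewrite eqn_leq sq s1.
move: rz; rewrite /root horner_coef size_cpoly s2 big_ord_recr big_ord_recr big_ord0 /=.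
rewrite add0r /cpoly !coef_map /= expr0 expr1 mulr1.
have l0 : q`_1 != 0 by move: q0; rewrite -lead_coef_eq0 lead_coefE s2.
move=> /eqP h; rewrite ImE'; congr (_%:C).
move: (congr1 Ic h); rewrite /=.
case: z {h} => x y /= e.
move: e; rewrite mul0r !addr0 add0r => /eqP.
by rewrite mulf_eq0 (negbTE l0) => /eqP.
Qed.

Lemma hyp_prodX (rs : seq R) : hyperbolic (\prod_(r <- rs) ('X - r%:P)).
Proof.
elim: rs => [|r rs IH]; first by rewrite big_nil; apply: hyp_size2; rewrite ?oner_eq0 ?size_poly1.
rewrite big_cons; apply: hyp_mul => //; apply: hyp_size2; rewrite ?polyXsubC_eq0 ?size_XsubC //.
Qed.

Lemma hyp_scale (a : R) (p : {poly R}) : a != 0 -> hyperbolic (a *: p) -> hyperbolic p.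
Proof.
move=> a0 [h0 h]; split; first by apply: contraNneq h0 => ->; rewrite scaler0.
move=> z rz; apply: h; move: rz; rewrite /root /cpoly map_polyZ hornerZ => /eqP ->.
by rewrite mulr0.
Qed.

Lemma hyp_fact_n n (p : {poly R}) : (size p <= n)%N -> hyperbolic p ->
  exists s : seq R, p = lead_coef p *: \prod_(x <- s) ('X - x%:P).
Proof.
elim: n p => [|n IH] p sp hp.
  by move: hp => [p0 _]; move: sp; rewrite leqn0 size_poly_eq0 (negbTE p0).
have [s1|s1] := leqP (size p) 1.
  exists [::]; rewrite big_nil [in LHS](size1_polyC s1) [in RHS](size1_polyC s1).
  by rewrite lead_coefC alg_polyC.
have [p0 hr] := hp.
have : size (cpoly p) != 1 by rewrite size_cpoly; apply: contraTneq s1 => ->.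
move=> /closed_rootP [z rz].
have iz := hr z rz.
have zE : z = (Rc z)%:C.
  move: iz; rewrite ImE' => -[]; case: z {rz} => x y /= -> //.
have rp : root p (Rc z) by rewrite -cpoly_root -zE.
have [q pq] := factor_theorem _ _ rp.
have q0 : q != 0 by apply: contraNneq p0 => q0; rewrite pq q0 mul0r.
have sq : (size q <= n)%N.
  move: sp; rewrite pq size_mul ?polyXsubC_eq0 // size_XsubC addn2 /=.
  by [].
have hq : hyperbolic q.
  split => // w rw; apply: hr; rewrite pq cpolyM rootM rw //.
have [s es] := IH q sq hq.
exists (Rc z :: s).
rewrite big_cons pq lead_coefM lead_coefXsubC mulr1 {1}es.
by rewrite -scalerAl mulrC.
Qed.

Lemma hyp_fact (p : {poly R}) : hyperbolic p ->
  exists s : seq R, p = lead_coef p *: \prod_(x <- s) ('X - x%:P).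
Proof. exact: (@hyp_fact_n (size p)). Qed.

Lemma nonuniq_sq (s : seq R) : ~~ uniq s ->
  exists x, ('X - x%:P) ^+ 2 %| \prod_(r <- s) ('X - r%:P).
Proof.
elim: s => [|a s IH] //=; rewrite negb_and negbK => /orP [ain|nu].
  exists a; rewrite big_cons expr2 dvdp_mul2l ?polyXsubC_eq0 //.
  by rewrite dvdp_XsubCl root_prod_XsubC.
have [x hx] := IH nu; exists x; rewrite big_cons; exact: dvdp_mull.
Qed.

Lemma strict_fact (p : {poly R}) : strictly_hyperbolic p ->
  exists s : seq R, uniq s /\ p = lead_coef p *: \prod_(x <- s) ('X - x%:P).
Proof.
move=> [hp hs]; have [s es] := hyp_fact p hp; exists s; split => //.
apply/negPn/negP => /nonuniq_sq [x hx].
have l0 : lead_coef p != 0 by rewrite lead_coef_eq0; case: hp.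
have hx' : ('X - x%:P) ^+ 2 %| p by rewrite es dvdpZr.
move: (hs x%:C).
suff -> : ('X - (x%:C)%:P) ^+ 2 = cpoly (('X - x%:P) ^+ 2).
  by rewrite /cpoly dvdp_map hx'.
by rewrite /cpoly rmorphXn /= map_polyXsubC.
Qed.

Lemma small_all (A : eqType) (s : seq A) (P : A -> R -> Prop) :
  (forall a e e', 0 < e' <= e -> P a e -> P a e') ->
  (forall a, a \in s -> exists2 e, 0 < e & P a e) ->
  exists2 e, 0 < e & forall a, a \in s -> P a e.
Proof.
move=> mono; elim: s => [|b s IH] h.
  by exists 1 => // a; rewrite in_nil.
have [e1 e10 he1] := h b (mem_head _ _).
have [e2 e20 he2] : exists2 e, 0 < e & forall a, a \in s -> P a e.
  by apply: IH => a ain; apply: h; rewrite in_cons ain orbT.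
exists (Num.min e1 e2); first by rewrite lt_min e10 e20.
move=> a; rewrite in_cons => /orP [/eqP ->|ain].
  by apply: (mono _ e1) => //; rewrite lt_min e10 e20 /= ge_min lexx.
apply: (mono _ e2); last exact: he2.
by rewrite lt_min e10 e20 /= ge_min lexx orbT.
Qed.

Lemma ivt2 (p : {poly R}) (a b : R) : a <= b -> p.[a] * p.[b] <= 0 ->
  exists2 x, a <= x <= b & root p x.
Proof.
move=> ab hab.
have [pa|pa] := lerP p.[a] 0.
  have [pa0|pa0] := eqVneq p.[a] 0.
    by exists a; rewrite ?lexx ?ab // /root pa0.
  apply: poly_ivt => //; rewrite pa /=.
  have pan : p.[a] < 0 by rewrite lt_neqAle pa0 pa.
  by rewrite -(nmulr_rle0 _ pan).
have := @poly_ivt _ (- p) a b ab; rewrite !hornerN.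
case.
  by rewrite oppr_le0 ltW //= oppr_ge0 -(pmulr_rle0 _ pa).
by move=> x hx; rewrite rootN => rx; exists x.
Qed.

Lemma pos_pert (a b : R) : `|a| < `|b| -> 0 < (a + b) * b.
Proof.
move=> h.
have b0 : b != 0 by apply: contraTneq h => ->; rewrite normr0 -leNgt normr_ge0.
have : `|a * b| < b * b.
  have e : `|b| * `|b| = b * b by rewrite -!expr2 real_normK // num_real.
  by rewrite -e normrM ltr_pM2r // normr_gt0.
rewrite mulrDl => h2.
have := ler_norm (a * b); rewrite -normrN => h3.
have : - (a * b) <= `|a * b| by rewrite -normrN ler_norm.
lra.
Qed.

Lemma exists_nonroot (p : {poly R}) : p != 0 -> exists y, p.[y] != 0.
Proof.
move=> p0.
set rs := [seq (i%:R : R) | i <- iota 0 (size p)].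
have urs : uniq rs by rewrite map_inj_uniq ?iota_uniq // => i j /eqP; rewrite eqr_nat => /eqP.
have : ~~ all (root p) rs.
  by apply/negP => /(max_poly_roots p0) /(_ urs); rewrite size_map size_iota ltnn.
by case/allPn => y _ ry; exists y.
Qed.

Lemma collect (h : {poly R}) (d : R) (s : seq R) : uniq s ->
  (forall x y, x \in s -> y \in s -> x != y -> 2 * d < `|x - y|) ->
  (forall x, x \in s -> exists2 r, root h r & `|r - x| <= d) ->
  exists rs : seq R, [/\ size rs = size s, uniq rs, all (root h) rs &
     forall r, r \in rs -> exists2 x, x \in s & `|r - x| <= d].
Proof.
elim: s => [|a s IH] /=.
  by move=> _ _ _; exists [::]; split => // r; rewrite in_nil.
move=> /andP [ans us] sep hr.
have [r rr dr] := hr a (mem_head _ _).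
have [rs [srs urs ars hrs]] : exists rs : seq R, [/\ size rs = size s, uniq rs, all (root h) rs &
     forall r, r \in rs -> exists2 x, x \in s & `|r - x| <= d].
  apply: IH => //.
    by move=> x y xs ys; apply: sep; rewrite in_cons ?xs ?ys orbT.
  by move=> x xs; apply: hr; rewrite in_cons xs orbT.
exists (r :: rs); split => /=.
- by rewrite srs.
- rewrite urs andbT; apply/negP => /hrs [x xs dx].
  have ax : a != x by apply: contraNneq ans => ->.
  have xs' : x \in a :: s by rewrite in_cons xs orbT.
  have := sep a x (mem_head _ _) xs' ax.
  have := ler_distD r a x.
  rewrite distrC in dr.
  lra.
- by rewrite rr ars.
- move=> r'; rewrite in_cons => /orP [/eqP ->|/hrs [x xs dx]].
    by exists a => //; rewrite mem_head.
  by exists x => //; rewrite in_cons xs orbT.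
Qed.

Lemma sep_exists (s : seq R) :
  exists2 d, 0 < d & forall x y, x \in s -> y \in s -> x != y -> 2 * d < `|x - y|.
Proof.
have := @small_all _ s (fun x d => forall y, y \in s -> x != y -> 2 * d < `|x - y|).
case.
- move=> a e e' /andP [e'0 e'e] h y ys ay; have := h y ys ay; lra.
- move=> x xs.
  have := @small_all _ s (fun y d => x != y -> 2 * d < `|x - y|); case.
  + move=> a e e' /andP [e'0 e'e] h ay; have := h ay; lra.
  + move=> y ys; have [->|xy] := eqVneq x y.
      by exists 1 => //; rewrite eqxx.
    exists (`|x - y| / 4) => [|_]; first by rewrite divr_gt0 // normr_gt0 subr_eq0.
    have : 0 < `|x - y| by rewrite normr_gt0 subr_eq0.
    lra.
  + by move=> e e0 he; exists e => // y ys; apply: he.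
- by move=> e e0 he; exists e => // x y xs; apply: he.
Qed.

Lemma sign_alt (c d x : R) (s : seq R) : c != 0 -> uniq s -> 0 < d ->
  (forall x y, x \in s -> y \in s -> x != y -> 2 * d < `|x - y|) -> x \in s ->
  (c *: \prod_(r <- s) ('X - r%:P)).[x - d] * (c *: \prod_(r <- s) ('X - r%:P)).[x + d] < 0.
Proof.
move=> c0 us d0 sep xs.
rewrite (big_rem x xs) /=.
set Q := \prod_(r <- rem x s) ('X - r%:P).
rewrite !hornerZ !hornerM !hornerXsubC.
have hQ : 0 < Q.[x - d] * Q.[x + d].
  rewrite ltNge; apply/negP => /(ivt2 _ _ _ (_ : x - d <= x + d)) [].
    lra.
  move=> r /andP [r1 r2]; rewrite root_prod_XsubC (mem_rem_uniq _ us) inE => /andP [rx rs].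
  have xr : x != r by rewrite eq_sym.
  have := sep x r xs rs xr.
  have : `|x - r| <= d.
    by rewrite ler_norml; apply/andP; split; lra.
  lra.
have cc : 0 < c * c by rewrite -expr2 exprn_even_gt0.
set A := Q.[x - d] * Q.[x + d] in hQ.
have -> : c * ((x - d - x) * Q.[x - d]) * (c * ((x + d - x) * Q.[x + d])) = - (c * c * (d * d) * A).
  by rewrite /A; ring.
rewrite oppr_lt0; apply: mulr_gt0 => //; apply: mulr_gt0 => //; exact: mulr_gt0.
Qed.

Lemma small1 (a b : R) : a != 0 -> exists2 e, 0 < e & `|e * b| < `|a|.
Proof.
move=> a0; have a0' : 0 < `|a| by rewrite normr_gt0.
exists (`|a| / (`|b| + 1)); first by rewrite divr_gt0 // ltr_wpDl.
rewrite normrM ger0_norm ?divr_ge0 ?addr_ge0 // -mulrA mulrC -mulrA.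
have k : 0 < `|b| + 1 by rewrite ltr_wpDl.
rewrite mulrC; first [rewrite ltr_pdivrMr // | rewrite ltr_pdivlMr //]; nra.
Qed.

Lemma small_mono (e e' b A : R) : 0 < e' <= e -> `|e * b| < A -> `|e' * b| < A.
Proof.
move=> /andP [e'0 e'e].
rewrite !normrM (gtr0_norm e'0) (gtr0_norm (lt_le_trans e'0 e'e)).
move=> h; apply: le_lt_trans h; apply: ler_wpM2r => //.
Qed.

Lemma part1 n (T : {poly R} -> {poly R}) :
  linear_on n.+1 T -> preserves n.+1 (@hyperbolic R) T ->
  forall f : {poly R}, strictly_hyperbolic f ->
  (size f = n.+1 \/ size f = n.+2) -> T f = 0 ->
  forall g : {poly R}, (size g <= n.+2)%N -> hyperbolic (T g) \/ T g = 0.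
Proof.
move=> lin pres f sf sz Tf g sg.
have [s [us ef]] := strict_fact f sf.
have f0 : f != 0 by case: sf => -[].
have c0 : lead_coef f != 0 by rewrite lead_coef_eq0.
have ssf : size f = (size s).+1 by rewrite {1}ef size_scale // size_prod_XsubC.
have [d d0 sep] := sep_exists s.
have [y0 fy0] := exists_nonroot f f0.
have salt : forall x, x \in s -> f.[x - d] * f.[x + d] < 0.
  by move=> x xs; rewrite ef; apply: sign_alt.
set pts := y0 :: flatten [seq [:: x - d; x + d] | x <- s].
have ptsP : forall y, y \in pts -> f.[y] != 0.
  move=> y; rewrite in_cons => /orP [/eqP -> //|/flatten_mapP [x xs]].
  have := salt x xs; rewrite !inE => hx /orP [] /eqP ->.
    by apply: contraTneq hx => ->; rewrite mul0r ltxx.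
  by apply: contraTneq hx => ->; rewrite mulr0 ltxx.
have [e e0 he] := @small_all _ pts (fun y e => `|e * g.[y]| < `|f.[y]|)
  (fun a e e' h1 h2 => @small_mono e e' _ _ h1 h2) (fun y yp => @small1 _ g.[y] (ptsP y yp)).
set h := e *: g + f.
have hpos : forall y, y \in pts -> 0 < h.[y] * f.[y].
  by move=> y yp; rewrite /h hornerD hornerZ; apply: pos_pert; apply: he.
have h0 : h != 0.
  apply: contraTneq (hpos y0 (mem_head _ _)) => ->; by rewrite horner0 mul0r ltxx.
have hroot : forall x, x \in s -> exists2 r, root h r & `|r - x| <= d.
  move=> x xs.
  have p1 : x - d \in pts by rewrite in_cons; apply/orP; right; apply/flatten_mapP; exists x => //; rewrite !inE eqxx.
  have p2 : x + d \in pts by rewrite in_cons; apply/orP; right; apply/flatten_mapP; exists x => //; rewrite !inE eqxx orbT.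
  have A := hpos _ p1; have B := hpos _ p2; have C := salt x xs.
  have hh : h.[x - d] * h.[x + d] <= 0 by nra.
  have [|r /andP [r1 r2] rr] := ivt2 h (x - d) (x + d) _ hh; first lra.
  by exists r => //; rewrite ler_norml; apply/andP; split; lra.
have [rs [srs urs ars _]] := collect _ _ _ us sep hroot.
have urs' : poly.uniq_roots rs by rewrite uniq_rootsE.
have [q hq] := uniq_roots_prod_XsubC ars urs'.
have q0 : q != 0 by apply: contraNneq h0 => q0; rewrite hq q0 mul0r.
have sf2 : (size f <= n.+2)%N by case: sz => ->.
have sh : (size h <= n.+2)%N.
  by apply: leq_trans (size_polyD _ _) _; rewrite geq_max (leq_trans (size_scale_leq _ _) sg) sf2.
have sq : (size q <= 2)%N.
  have pn0 : \prod_(z <- rs) ('X - z%:P) != 0 by rewrite monic_neq0 // monic_prod_XsubC.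
  move: sh; rewrite hq size_mul // (size_prod_XsubC rs id) srs.
  move: ssf; case: sz => -> [] <-; rewrite addnS /= => H.
    by rewrite -(leq_add2r n) add2n; exact: H.
  by apply: (leq_trans _ (leqnSn 1)); rewrite -(leq_add2r n.+1) add1n; exact: H.
have hh : hyperbolic h by rewrite hq; apply: hyp_mul; [apply: hyp_size2|apply: hyp_prodX].
have := pres h sh hh.
rewrite /h lin // Tf addr0.
have e0' : e != 0 by rewrite gt_eqF.
case=> [H|H]; first by left; apply: hyp_scale H.
by right; move/eqP: H; rewrite scaler_eq0 (negbTE e0') => /eqP.
Qed.

Definition ns (z : R[i]) : R := Rc z ^+ 2 + Ic z ^+ 2.

Lemma ns_mul z w : ns (z * w) = ns z * ns w.
Proof. case: z => a b; case: w => c d. rewrite /ns /=. ring. Qed.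
Lemma ns_add z w : ns (z + w) <= 2 * (ns z + ns w).
Proof. case: z => a b; case: w => c d. rewrite /ns /=. have := sqr_ge0 (a - c). have := sqr_ge0 (b - d). nra. Qed.
Lemma ns_ge0 z : 0 <= ns z.
Proof. by rewrite /ns addr_ge0 // sqr_ge0. Qed.
Lemma ns_opp z : ns (- z) = ns z.
Proof. case: z => a b; rewrite /ns /=. ring. Qed.
Lemma ns0 : ns 0 = 0.
Proof. by rewrite /ns /= expr0n addr0. Qed.
Lemma ns1 : ns 1 = 1.
Proof. by rewrite /ns /= expr0n addr0 expr1n. Qed.
Lemma ns_real (a : R) : ns a%:C = a ^+ 2.
Proof. by rewrite /ns /= expr0n addr0. Qed.
Lemma ns_gt0 z : z != 0 -> 0 < ns z.
Proof.
case: z => a b nz; rewrite /ns /=.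
have [a0|a0] := eqVneq a 0.
  have b0 : b != 0 by apply: contraNneq nz => b0; rewrite a0 b0.
  by rewrite ltr_wpDl ?sqr_ge0 // exprn_even_gt0.
by rewrite ltr_wpDr ?sqr_ge0 // exprn_even_gt0.
Qed.
Lemma ns_exp z j : ns (z ^+ j) = ns z ^+ j.
Proof. by elim: j => [|j IH]; rewrite ?expr0 ?ns1 // !exprS ns_mul IH. Qed.
Lemma ns_prod (r : seq R[i]) (F : R[i] -> R[i]) :
  ns (\prod_(a <- r) F a) = \prod_(a <- r) ns (F a).
Proof. by elim: r => [|a r IH]; rewrite ?big_nil ?ns1 // !big_cons ns_mul IH. Qed.
Lemma ns_sum m (w : 'I_m -> R[i]) :
  ns (\sum_(j < m) w j) <= 2 ^+ m * \sum_(j < m) ns (w j).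
Proof.
elim: m w => [|m IH] w; first by rewrite !big_ord0 ns0 mulr0.
rewrite !big_ord_recr /=.
apply: le_trans (ns_add _ _) _.
have := IH (fun j => w (widen_ord (leqnSn m) j)).
set S := \sum_(i < m) ns _; set A := ns (\sum_(i < m) _) => hA.
have S0 : 0 <= S by apply: sumr_ge0 => i _; apply: ns_ge0.
have W0 := ns_ge0 (w ord_max).
have e2 : 1 <= 2 ^+ m :> R by rewrite exprn_ege1 // ler1n.
rewrite exprS; nra.
Qed.

Definition kk (a : R[i]) : R := Ic a ^+ 2 / (1 + Rc a ^+ 2 + Ic a ^+ 2).

Lemma kk_gt0 a : Ic a < 0 -> 0 < kk a.
Proof.
move=> h; have := sqr_ge0 (Rc a); have : 0 < Ic a ^+ 2 by rewrite exprn_even_gt0 // ltr0_neq0.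
move=> h1 h2; apply: divr_gt0 => //; lra.
Qed.

Lemma ns_lower (z a : R[i]) : 0 <= Ic z -> Ic a < 0 -> kk a * (1 + ns z) <= ns (z - a).
Proof.
case: z => x y; case: a => p q /= y0 q0.
rewrite /kk /ns /= mulrC mulrA.
have S0 : 0 < 1 + p ^+ 2 + q ^+ 2 by have := sqr_ge0 p; have := sqr_ge0 q; lra.
rewrite ler_pdivrMr //.
have := sqr_ge0 (p * (x - p) - q ^+ 2).
have := sqr_ge0 (x - p).
have : 0 <= y * (- q) by rewrite mulr_ge0 // oppr_ge0 ltW.
have := sqr_ge0 y; have := sqr_ge0 p.
nra.
Qed.

Lemma prod_const_seq (r : seq R[i]) (x : R) : \prod_(a <- r) x = x ^+ size r.
Proof. by elim: r => [|a r IH]; rewrite ?big_nil ?expr0 // big_cons IH exprS. Qed.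

Lemma Im_pos (z : R[i]) : (0 < 'Im z) = (0 < Ic z).
Proof. by rewrite ImE' ltcR. Qed.
Lemma Im_nneg (z : R[i]) : (0 <= 'Im z) = (0 <= Ic z).
Proof. by rewrite ImE' lecR. Qed.

Lemma part2 n (T : {poly R[i]} -> {poly R[i]}) :
  linear_on n T -> preserves n (@stable R) T ->
  forall f : {poly R[i]}, strictly_stable f -> size f = n.+1 -> T f = 0 ->
  forall g : {poly R[i]}, (size g <= n.+1)%N -> stable (T g) \/ T g = 0.
Proof.
move=> lin pres f sf sz Tf g sg.
case: (closed_field_poly_normal f) => r ef.
have f0 : f != 0 by rewrite -size_poly_eq0 sz.
set c := lead_coef f.
have c0 : c != 0 by rewrite lead_coef_eq0.
have sr : size r = n.
  by move: sz; rewrite ef size_scale // size_prod_XsubC => -[].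
have rneg : forall a, a \in r -> Ic a < 0.
  move=> a ar; rewrite ltNge; apply/negP => ha.
  have := sf a; rewrite Im_nneg => /(_ ha); rewrite ef hornerZ.
  by move: (root_prod_XsubC r a); rewrite ar /root => /eqP ->; rewrite mulr0 eqxx.
set K := \prod_(a <- r) kk a.
have K0 : 0 < K by rewrite /K big_seq; apply: prodr_gt0 => a ar; apply: kk_gt0; apply: rneg.
set L := ns c * K.
have L0 : 0 < L by rewrite mulr_gt0 // ns_gt0.
set G := \sum_(j < size g) ns g`_j.
have G0 : 0 <= G by apply: sumr_ge0 => j _; apply: ns_ge0.
set M := 2 ^+ n.+1 * G.
have M0 : 0 <= M by rewrite mulr_ge0 // exprn_ge0.
have lowf : forall z, 0 <= Ic z -> L * (1 + ns z) ^+ n <= ns f.[z].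
  move=> z hz; rewrite ef hornerZ horner_prod ns_mul ns_prod /L -mulrA.
  apply: ler_wpM2l; first exact: ns_ge0.
  have -> : K * (1 + ns z) ^+ n = \prod_(a <- r) (kk a * (1 + ns z)).
    by rewrite big_split /= prod_const_seq sr.
  rewrite big_seq [X in _ <= X]big_seq.
  apply: ler_prod => a ar; rewrite hornerXsubC ns_lower ?rneg // andbT.
  by apply: mulr_ge0; [exact: ltW (kk_gt0 a (rneg a ar)) | have := ns_ge0 z; lra].
have upg : forall z, ns g.[z] <= M * (1 + ns z) ^+ n.
  move=> z; rewrite horner_coef; apply: le_trans (ns_sum _ _) _.
  have N0 := ns_ge0 z.
  have W1 : 1 <= 1 + ns z by rewrite lerDl.
  have P0 : 0 <= \sum_(j < size g) ns (g`_j * z ^+ j) by apply: sumr_ge0 => j _; apply: ns_ge0.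
  apply: (@le_trans _ _ (2 ^+ n.+1 * \sum_(j < size g) ns (g`_j * z ^+ j))).
    by apply: ler_wpM2r => //; apply: ler_weXn2l; rewrite ?ler1n.
  rewrite /M -mulrA; apply: ler_wpM2l; first by rewrite exprn_ge0.
  rewrite /G mulr_suml; apply: ler_sum => j _.
  rewrite ns_mul ns_exp; apply: ler_wpM2l; first exact: ns_ge0.
  apply: (@le_trans _ _ ((1 + ns z) ^+ j)).
    by apply: lerXn2r; rewrite ?nnegrE //; lra.
  by apply: ler_weXn2l => //; rewrite -ltnS; apply: leq_trans sg.
set e := Num.min 1 (L / (4 * (M + 1))).
have e0 : 0 < e by rewrite lt_min ltr01 /= divr_gt0 // mulr_gt0 // ltr_wpDl.
have e1 : e <= 1 by rewrite ge_min lexx.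
have eM : e * (M + 1) <= L / 4.
  have : e <= L / (4 * (M + 1)) by rewrite ge_min lexx orbT.
  have M1 : 0 < M + 1 by rewrite ltr_wpDl.
  rewrite invfM mulrA ler_pdivlMr //.
set h := e%:C *: g + f.
have hz : forall z, 0 <= Ic z -> h.[z] != 0.
  move=> z hz; rewrite /h hornerD hornerZ.
  have B := lowf z hz; have U := upg z.
  set W := (1 + ns z) ^+ n in B U.
  have W0 : 0 < W by rewrite exprn_gt0 // ltr_wpDr ?ns_ge0.
  have A : ns (e%:C * g.[z]) <= L / 4 * W.
    rewrite ns_mul ns_real.
    have hg0 := ns_ge0 g.[z].
    have : e ^+ 2 <= e by rewrite expr2 ger_pMl.
    nra.
  have Hf : ns f.[z] <= 2 * (ns (e%:C * g.[z] + f.[z]) + ns (e%:C * g.[z])).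
    by have := ns_add (e%:C * g.[z] + f.[z]) (- (e%:C * g.[z])); rewrite ns_opp addrC addKr.
 apply/negP => /eqP H0; move: Hf; rewrite H0 ns0.
  nra.
have h0 : h != 0 by apply: contraTneq (hz 'i%C (ler01)) => ->; rewrite horner0 eqxx.
have hs : stable h by split => // z; rewrite Im_pos => /ltW; apply: hz.
have sh : (size h <= n.+1)%N.
  rewrite /h; apply: leq_trans (size_polyD _ _) _; rewrite geq_max sz leqnn andbT; exact: leq_trans (size_scale_leq _ _) sg.
have := pres h sh hs.
rewrite /h lin ?sz // Tf addr0.
have e0' : e%:C != 0 by rewrite eq_complex /= gt_eqF.
case=> [[H1 H2]|H].
  left; split; first by apply: contraNneq H1 => ->; rewrite scaler0.
  by move=> z /H2; rewrite hornerZ mulf_eq0 negb_or => /andP [].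
by right; move/eqP: H; rewrite scaler_eq0 (negbTE e0') => /eqP.
Qed.
End P1.

Local Open Scope ring_scope.

Theorem mainTheorem12 (R : realType) :
  (forall (n : nat) (T : {poly R} -> {poly R}),
      linear_on n.+1 T -> preserves n.+1 (@hyperbolic R) T ->
      forall f : {poly R}, strictly_hyperbolic f ->
        (size f = n.+1 \/ size f = n.+2) -> T f = 0 ->
        forall g : {poly R}, (size g <= n.+2)%N -> hyperbolic (T g) \/ T g = 0)
  /\
  (forall (n : nat) (T : {poly R[i]} -> {poly R[i]}),
      linear_on n T -> preserves n (@stable R) T ->
      forall f : {poly R[i]}, strictly_stable f -> size f = n.+1 -> T f = 0 ->
        forall g : {poly R[i]}, (size g <= n.+1)%N -> stable (T g) \/ T g = 0).
Proof. split; [exact: part1 | exact: part2]. Qed.
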